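(* Let $\varphi:G\times X\to X$ be an action of a metrizable group $G$ on a non-meagre metric space $X$. If each point-evaluation map $\varphi_x:g\mapsto\varphi(g,x)$ is countably-covered and takes open sets to sets with the Baire property, then the action is a Nikodym action.
   Context: A group action satisfies $\varphi(e_G,x)=x$, $\varphi(gh,x)=\varphi(g,\varphi(h,x))$; write $Ux=\varphi_x(U)$. The map $\varphi_x$ is countably-covered if there exist self-homeomorphisms $h^x_n$ ($n\in\mathbb N$) of $X$ such that for every open neighbourhood $U$ (of $e_G$) in $G$ the sets $\{h^x_n(\varphi_x(U)):n\in\mathbb N\}$ cover $X$. The action is a Nikodym action if for every non-empty open neighbourhood $U$ of $e_G$ and every $x\in X$, $Ux$ contains a non-meagre set with the Baire property. *)

(* Defs.v *)
From HB Require Import structures.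
From mathcomp Require Import all_boot all_order all_algebra.
From mathcomp Require Import all_classical all_reals all_analysis.
Set Implicit Arguments. Unset Strict Implicit. Unset Printing Implicit Defensive.
Import Order.TTheory GRing.Theory Num.Theory.
Local Open Scope classical_set_scope.

Definition nowhere_dense {T : topologicalType} (A : set T) : Prop :=
  (closure A)° = set0.

Definition meagre {T : topologicalType} (A : set T) : Prop :=
  exists F : nat -> set T,
    (forall n, nowhere_dense (F n)) /\ A `<=` \bigcup_n F n.

Definition baire_property {T : topologicalType} (A : set T) : Prop :=
  exists U : set T, open U /\ meagre ((A `\` U) `|` (U `\` A)).

Definition homeomorphism {T : topologicalType} (h : T -> T) : Prop :=
  exists g : T -> T, cancel h g /\ cancel g h /\ continuous h /\ continuous g.

Definition topological_group {G : topologicalType}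
  (mul : G -> G -> G) (inv : G -> G) (e : G) : Prop :=
  (forall a b c, mul a (mul b c) = mul (mul a b) c) /\
  (forall a, mul e a = a) /\ (forall a, mul a e = a) /\
  (forall a, mul (inv a) a = e) /\ (forall a, mul a (inv a) = e) /\
  continuous (fun p : G * G => mul p.1 p.2) /\ continuous inv.

Definition group_action {G X : Type} (mul : G -> G -> G) (e : G)
  (phi : G -> X -> X) : Prop :=
  (forall x, phi e x = x) /\ (forall g h x, phi (mul g h) x = phi g (phi h x)).

Definition evalmap {G X : Type} (phi : G -> X -> X) (x : X) : G -> X :=
  fun g => phi g x.

Definition countably_covered {G X : topologicalType} (e : G)
  (f : G -> X) : Prop :=
  exists h : nat -> X -> X, (forall n, homeomorphism (h n)) /\
    forall U : set G, open U -> U e ->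
      [set: X] `<=` \bigcup_n (h n @` (f @` U)).

Definition nikodym_action {G X : topologicalType} (e : G)
  (phi : G -> X -> X) : Prop :=
  forall (U : set G) (x : X), open U -> U e -> U !=set0 ->
    exists A : set X, A `<=` evalmap phi x @` U /\ ~ meagre A /\ baire_property A.

(* Main.v *)
Require Import Defs.
From HB Require Import structures.
From mathcomp Require Import all_boot all_order all_algebra.
From mathcomp Require Import all_classical all_reals all_analysis.
Local Open Scope classical_set_scope.

Lemma nd_preimage {T : topologicalType} (h g : T -> T) (A : set T) :
  cancel h g -> cancel g h -> continuous h -> continuous g ->
  nowhere_dense A -> nowhere_dense (g @^-1` A).
Proof.
move=> hg gh hc gc; rewrite /nowhere_dense => nd.
apply/seteqP; split => [x|x] //= Hx.
have : (closure A)° (g x).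
  rewrite /interior /=.
  have H1 : nbhs (g x) (h @^-1` closure (g @^-1` A)).
    have H : h @ g x --> x by rewrite -{2}(gh x); exact: hc.
    exact: H _ Hx.
  apply: filterS H1 => y Hy N HN.
  have HN' : nbhs (h y) (g @^-1` N).
    have H : g @ h y --> y by rewrite -{2}(hg y); exact: gc.
    exact: H _ HN.
  have [z [Az Nz]] := Hy _ HN'.
  by exists (g z).
by rewrite nd.
Qed.

Lemma image_preimage {T : Type} (h g : T -> T) (A : set T) :
  cancel h g -> cancel g h -> h @` A = g @^-1` A.
Proof.
move=> hg gh; apply/seteqP; split => x.
  by case=> y Ay <-; rewrite /preimage /= hg.
by rewrite /preimage /= => Ag; exists (g x) => //.
Qed.

Lemma meagre_homeo {T : topologicalType} (h : T -> T) (A : set T) :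
  homeomorphism h -> meagre A -> meagre (h @` A).
Proof.
move=> [g [hg [gh [hc gc]]]] [F [nF AF]].
exists (fun n => g @^-1` F n); split.
  by move=> n; apply: nd_preimage hg gh hc gc (nF n).
rewrite (image_preimage _ _ A hg gh) => x /= Ax.
by have [n _ Fn] := AF _ Ax; exists n.
Qed.

Lemma meagre_bigcup {T : topologicalType} (B : nat -> set T) :
  (forall n, meagre (B n)) -> meagre (\bigcup_n B n).
Proof.
move=> mB.
have [F HF] := @choice nat (nat -> set T) (fun n F => (forall m, nowhere_dense (F m)) /\
     B n `<=` \bigcup_m F m) mB.
exists (fun k => match @unpickle (prod nat nat) k with
                 | Some p => F p.1 p.2 | None => set0 end); split.
  move=> k; case: unpickle => [p|] /=; first exact: (HF p.1).1.
  by rewrite /nowhere_dense closure0 interior0.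
move=> x [n _ Bx]; have [m _ Fx] := (HF n).2 _ Bx.
exists (pickle (n, m)) => //.
by rewrite pickleK.
Qed.

Theorem proposition1 (R : realType)
  (G : pseudoMetricType R) (mul : G -> G -> G) (inv : G -> G) (e : G)
  (X : pseudoMetricType R) (phi : G -> X -> X) :
  hausdorff_space G -> topological_group mul inv e ->
  hausdorff_space X -> ~ meagre [set: X] ->
  group_action mul e phi ->
  (forall x : X, countably_covered e (evalmap phi x)) ->
  (forall (x : X) (U : set G), open U -> baire_property (evalmap phi x @` U)) ->
  nikodym_action e phi.
Proof.
move=> _ _ _ nmX _ cc bp U x oU Ue _.
exists (evalmap phi x @` U); split => //; split; last exact: bp.
move=> mA; apply: nmX.
have [h [hh cov]] := cc x.
have := @meagre_bigcup X (fun n => h n @` (evalmap phi x @` U))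
  (fun n => @meagre_homeo X (h n) _ (hh n) mA).
move=> [F [nF sub]]; exists F; split => //.
by move=> y _; apply: sub; apply: cov.
Qed.
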